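(* There exist absolute constants $K_0,K_1,C>1$ such that the following holds. Let $A\in[0,1]^{m\times n}$ with $\Delta_1\ge K_0$, $x\in\mathbb{R}_{\ge0}^n$ with $Ax\ge\mathbf 1$, and $\alpha=\ln\Delta_1+\ln\ln\Delta_1+K_1$. Let $i\in[m]$ and let $\theta_i\in(0,1]$ satisfy $\sum_{j:A_{i,j}\ge\theta_i}A_{i,j}x_j\ge\frac12$ and $\sum_{j:A_{i,j}\le\theta_i}A_{i,j}x_j\ge\frac12$. If $z$ is the randomized rounding of $\alpha x$, then $\Pr[(Az)_i<1]\le C\,\theta_i/\Delta_1$.
   Context: $\Delta_1=\max_{j\in[n]}\sum_{i=1}^mA_{i,j}$. Randomized rounding of $\alpha x$: $z\in\mathbb{Z}_{\ge0}^n$ is the random vector with independent coordinates $z_j=\lfloor\alpha x_j\rfloor+B_j$, where $B_j\in\{0,1\}$ is Bernoulli with $\Pr[B_j=1]=\alpha x_j-\lfloor\alpha x_j\rfloor$. *)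

(* Defs.v *)
From mathcomp Require Import ssreflect ssrfun ssrbool eqtype ssrnat seq choice fintype finfun bigop.
From Stdlib Require Import Reals.
Set Implicit Arguments. Unset Strict Implicit. Unset Printing Implicit Defensive.
Open Scope R_scope.

Definition Rleb (a b : R) : bool := if Rle_dec a b then true else false.
Definition Rltb (a b : R) : bool := if Rlt_dec a b then true else false.

Definition rfloor (x : R) : R := IZR (Int_part x).
Definition rfrac (x : R) : R := x - rfloor x.

(* Delta_1 = max_j sum_i A_{i,j}  (0 when n = 0) *)
Definition Delta1 (m n : nat) (A : 'I_m -> 'I_n -> R) : R :=
  \big[Rmax/0]_(j : 'I_n) (\big[Rplus/0]_(i : 'I_m) A i j).

Definition rowdot (m n : nat) (A : 'I_m -> 'I_n -> R) (i : 'I_m) (y : 'I_n -> R) : R :=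
  \big[Rplus/0]_(j : 'I_n) (A i j * y j).

(* Randomized rounding of a*x: z_j = floor(a x_j) + B_j, B_j independent Bernoulli
   with Pr[B_j = 1] = frac(a x_j).  An outcome is B : {ffun 'I_n -> bool}. *)
Definition rr_value (n : nat) (a : R) (x : 'I_n -> R) (B : {ffun 'I_n -> bool}) (j : 'I_n) : R :=
  rfloor (a * x j) + (if B j then 1 else 0).

Definition rr_weight (n : nat) (a : R) (x : 'I_n -> R) (B : {ffun 'I_n -> bool}) : R :=
  \big[Rmult/1]_(j : 'I_n) (if B j then rfrac (a * x j) else 1 - rfrac (a * x j)).

Definition Pr_row_lt1 (m n : nat) (A : 'I_m -> 'I_n -> R) (a : R) (x : 'I_n -> R) (i : 'I_m) : R :=
  \big[Rplus/0]_(B : {ffun 'I_n -> bool} | Rltb (rowdot A i (rr_value a x B)) 1)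
     rr_weight a x B.

(* Main.v *)
Require Import Defs.
From HB Require Import structures.
From mathcomp Require Import ssreflect ssrfun ssrbool eqtype ssrnat seq choice fintype finfun bigop.
From Stdlib Require Import Reals Lra Lia ZArith.
Open Scope R_scope.


Lemma Rplus_assoc' : associative Rplus.
Proof. by move=> x y z; rewrite Rplus_assoc. Qed.
Lemma Rmult_assoc' : associative Rmult.
Proof. by move=> x y z; rewrite Rmult_assoc. Qed.
HB.instance Definition _ := Monoid.isComLaw.Build R 0 Rplus Rplus_assoc' Rplus_comm Rplus_0_l.
HB.instance Definition _ := Monoid.isComLaw.Build R 1 Rmult Rmult_assoc' Rmult_comm Rmult_1_l.
HB.instance Definition _ := Monoid.isMulLaw.Build R 0 Rmult Rmult_0_l Rmult_0_r.
HB.instance Definition _ := Monoid.isAddLaw.Build R Rmult Rplus Rmult_plus_distr_r Rmult_plus_distr_l.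

Lemma test (I J : finType) (F : I -> J -> R) :
  \big[Rmult/1]_i \big[Rplus/0]_j F i j = \big[Rplus/0]_(f : {ffun I -> J}) \big[Rmult/1]_i F i (f i).
Proof. exact: bigA_distr_bigA. Qed.

Lemma sum_le (I : finType) (P : pred I) (F G : I -> R) :
  (forall i, P i -> F i <= G i) -> \big[Rplus/0]_(i | P i) F i <= \big[Rplus/0]_(i | P i) G i.
Proof. move=> H; apply: (big_ind2 (fun a b => a <= b)) => //; [lra | move=> *; lra]. Qed.

Lemma prod_le (I : finType) (F G : I -> R) :
  (forall i, 0 <= F i <= G i) -> 0 <= \big[Rmult/1]_i F i <= \big[Rmult/1]_i G i.
Proof.
move=> H; apply: (big_ind2 (fun a b => 0 <= a <= b)) => //; first lra.
move=> a b c d [h1 h2] [h3 h4]; split; first by apply Rmult_le_pos.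
apply Rmult_le_compat; lra.
Qed.

Lemma exp_sum (I : finType) (F : I -> R) :
  exp (\big[Rplus/0]_i F i) = \big[Rmult/1]_i exp (F i).
Proof. apply: (big_morph exp) => //; [exact: exp_plus | exact: exp_0]. Qed.

Lemma exp_convex (l a : R) : 0 <= l <= 1 -> exp (l * a) <= l * exp a + (1 - l).
Proof.
move=> Hl; set c := l * a.
have E1 := exp_ineq1_le (a - c). have E2 := exp_ineq1_le (0 - c).
have P := exp_pos c.
have ea : exp a = exp (a - c) * exp c by rewrite -exp_plus; f_equal; ring.
have e0 : 1 = exp (0 - c) * exp c by rewrite -exp_plus -exp_0; f_equal; ring.
have h1 : exp c * (1 + (a - c)) <= exp a by rewrite ea; nra.
have h2 : exp c * (1 + (0 - c)) <= 1 by rewrite e0; nra.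
have : exp c = l * (exp c * (1 + (a - c))) + (1 - l) * (exp c * (1 + (0 - c))) by rewrite /c; ring.
nra.
Qed.

Lemma exp_mono (a b : R) : a <= b -> exp a <= exp b.
Proof. case=> h; [left; exact: exp_increasing | by rewrite h; right]. Qed.

Lemma ln_mono (a b : R) : 0 < a -> a <= b -> ln a <= ln b.
Proof. move=> ha; case=> h; [left; exact: ln_increasing | by rewrite h; right]. Qed.



Lemma floor_facts (y : R) : 0 <= y -> 0 <= rfloor y <= y /\ 0 <= rfrac y <= 1.
Proof.
move=> hy; have [h1 h2] := base_Int_part y.
have h3 : 0 <= rfloor y.
  rewrite /rfloor; have : (-1 < Int_part y)%Z by apply: lt_IZR; lra.
  move=> h; apply: IZR_le; lia.
rewrite /rfrac /rfloor in h3 *; lra.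
Qed.

Lemma rr_j (y s : R) : 0 <= y -> 0 <= s ->
  rfrac y * exp (- (s * (rfloor y + 1))) + (1 - rfrac y) * exp (- (s * (rfloor y + 0)))
  <= exp (- (y * (1 - exp (- s)))).
Proof.
move=> hy hs; have [[f0 fy] [p0 p1]] := floor_facts y hy.
have yE : y = rfloor y + rfrac y by rewrite /rfrac; ring.
move: f0 fy p0 p1 yE; generalize (rfloor y) (rfrac y) => f p f0 fy p0 p1 yE.
have es : 1 - s <= exp (- s) by have := exp_ineq1_le (- s); lra.
have es1 : exp (- s) <= 1 by rewrite -exp_0; apply: exp_mono ; lra.
have e1 : exp (- (s * (f + 1))) = exp (- (s * f)) * exp (- s) by rewrite -exp_plus; f_equal; ring.
have e2 : exp (- (y * (1 - exp (- s)))) = exp (- (f * (1 - exp (- s)))) * exp (- (p * (1 - exp (- s)))).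
  by rewrite -exp_plus; f_equal; rewrite yE; ring.
rewrite e1 e2 Rplus_0_r.
have A1 : exp (- (s * f)) <= exp (- (f * (1 - exp (- s)))).
  apply: exp_mono; have h : 0 <= f * (s - (1 - exp (- s))) by apply Rmult_le_pos; lra.
  have -> : - (s * f) = - (f * (1 - exp (- s))) - f * (s - (1 - exp (- s))) by ring.
  lra.
have A2 : 1 - p * (1 - exp (- s)) <= exp (- (p * (1 - exp (- s)))).
  have := exp_ineq1_le (- (p * (1 - exp (- s)))); lra.
have P1 := exp_pos (- (s * f)). have P2 := exp_pos (- (p * (1 - exp (- s)))).
have P3 := exp_pos (- s).
have H0 : 0 <= 1 - p * (1 - exp (- s)) by nra.
have -> : p * (exp (- (s * f)) * exp (- s)) + (1 - p) * exp (- (s * f)) = exp (- (s * f)) * (1 - p * (1 - exp (- s))) by ring.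
apply: Rle_trans (Rmult_le_compat_r _ _ _ H0 A1) _.
apply: Rmult_le_compat_l; [left; exact: exp_pos | exact: A2].
Qed.



Lemma sum_opp (I : finType) (F : I -> R) :
  \big[Rplus/0]_i (- F i) = - \big[Rplus/0]_i F i.
Proof. by rewrite (big_morph Ropp Ropp_plus_distr Ropp_0). Qed.

Lemma chernoff (m n : nat) (A : 'I_m -> 'I_n -> R) (a : R) (x : 'I_n -> R) (i : 'I_m) (t : R) :
  (forall j, 0 <= x j) -> 0 <= a -> 0 <= t -> (forall j, 0 <= A i j) ->
  Pr_row_lt1 A a x i <= exp (t - \big[Rplus/0]_j (a * x j * (1 - exp (- (t * A i j))))).
Proof.
move=> hx ha ht hA.
pose F := fun (j : 'I_n) (b : bool) =>
  (if b then rfrac (a * x j) else 1 - rfrac (a * x j)) *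
  exp (- (t * (A i j * (rfloor (a * x j) + (if b then 1 else 0))))).
have hw : forall B, 0 <= rr_weight a x B.
  move=> B; rewrite /rr_weight; apply: (big_ind (fun v => 0 <= v)); first lra.
    by move=> u v hu hv; apply: Rmult_le_pos.
  move=> j _; have [_ [h1 h2]] := floor_facts (a * x j) (Rmult_le_pos _ _ ha (hx j)).
  case: (B j); lra.
apply: (@Rle_trans _ (\big[Rplus/0]_(B : {ffun 'I_n -> bool})
     (exp t * \big[Rmult/1]_j F j (B j)))).
  rewrite /Pr_row_lt1 big_mkcond; apply: sum_le => B _.
  have -> : exp t * \big[Rmult/1]_j F j (B j) =
    rr_weight a x B * exp (t + - (t * rowdot A i (rr_value a x B))).
    rewrite /F big_split /= -/(rr_weight a x B).
    rewrite exp_plus /rowdot Rmult_comm Rmult_assoc; f_equal.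
    rewrite [RHS]Rmult_comm; f_equal.
    by rewrite big_distrr /= -sum_opp exp_sum.
  have hB := hw B.
  rewrite /Rltb; case: Rlt_dec => hlt.
  rewrite -{1}(Rmult_1_r (rr_weight a x B)); apply: Rmult_le_compat_l => //.
  rewrite -exp_0; apply: exp_mono; nra.
  apply: Rmult_le_pos => //; left; exact: exp_pos.
rewrite -big_distrr /= -bigA_distr_bigA /=.
rewrite /Rminus exp_plus -sum_opp exp_sum.
apply: Rmult_le_compat_l; first by left; exact: exp_pos.
apply: (fun H => proj2 (@prod_le _ _ _ H)) => j.
rewrite big_bool /F.
have hy := Rmult_le_pos _ _ ha (hx j).
have [_ [h1 h2]] := floor_facts (a * x j) hy.
split.
  apply: Rplus_le_le_0_compat; apply: Rmult_le_pos; try lra; left; exact: exp_pos.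
have := rr_j (a * x j) (t * A i j) hy (Rmult_le_pos _ _ ht (hA j)).
have E1 : forall c, - (t * (A i j * c)) = - (t * A i j * c) by move=> c; ring.
rewrite !E1.
have -> : - (a * x j * (1 - exp (- (t * A i j)))) = - (a * x j * (1 - exp (- (t * A i j)))) by [].
done.
Qed.



Lemma LB (n : nat) (a x : 'I_n -> R) (theta k L : R) :
  (forall j, 0 <= a j <= 1) -> (forall j, 0 <= x j) -> 0 < theta <= 1 ->
  0 <= k -> exp (- k) = / L -> 0 <= 1 - / L ->
  1 <= \big[Rplus/0]_j (a j * x j) ->
  1 / 2 <= \big[Rplus/0]_(j | Rleb (a j) theta) (a j * x j) ->
  (1 - / L) * (1 + / theta) / 2 <= \big[Rplus/0]_j (x j * (1 - exp (- (k * / theta * a j)))).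
Proof.
move=> ha hx ht hk ek hc h1 h2.
set c := 1 - / L in hc *. set u := / theta.
have htu : theta * u = 1 by rewrite /u; field; lra.
have hu0 : 0 < u by rewrite /u; apply: Rinv_0_lt_compat; lra.
have hu : 1 <= u by nra.
apply: (@Rle_trans _ (\big[Rplus/0]_j (c * (a j * x j + (u - 1) * (if Rleb (a j) theta then a j * x j else 0))))).
  rewrite -big_distrr /= big_split /= -big_distrr /= -big_mkcond.
  have : 0 <= c * (u - 1) by apply: Rmult_le_pos; lra.
  rewrite [X in (u - 1) * X](_ : _ = \big[Rplus/0]_(j | Rleb (a j) theta) (a j * x j)) //.
  move=> _; have -> : c * (1 + u) / 2 = c * (1 + (u - 1) * (1 / 2)) by field.
  apply: Rmult_le_compat_l => //; apply: Rplus_le_compat; first exact: h1.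
  apply: Rmult_le_compat_l; [lra | exact: h2].
apply: sum_le => j _.
have [a0 a1] := ha j; have x0 := hx j.
rewrite /Rleb; case: Rle_dec => hle.
  set l := a j * u.
  have hl : 0 <= l <= 1.
    split; first by apply: Rmult_le_pos; lra.
    rewrite -htu /l; apply: Rmult_le_compat_r; lra.
  have := exp_convex l (- k) hl.
  have -> : l * - k = - (k * u * a j) by rewrite /l; ring.
  rewrite ek => hE.
  have -> : c * (a j * x j + (u - 1) * (a j * x j)) = x j * (c * l) by rewrite /l; ring.
  apply: Rmult_le_compat_l => //; rewrite /c; lra.
have hau : 1 <= a j * u.
  rewrite -htu; apply: Rmult_le_compat_r; lra.
have hE : exp (- (k * u * a j)) <= exp (- k).
  apply: exp_mono; nra.
rewrite ek in hE.
have -> : c * (a j * x j + (u - 1) * 0) = x j * (c * a j) by ring.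
apply: Rmult_le_compat_l => //.
have : c * a j <= c by nra.
rewrite /c; lra.
Qed.



Theorem mainTheorem11 :
  exists K0 K1 C : R, 1 < K0 /\ 1 < K1 /\ 1 < C /\
  forall (m n : nat) (A : 'I_m -> 'I_n -> R) (x : 'I_n -> R),
    (forall i j, 0 <= A i j <= 1) ->
    K0 <= Delta1 A ->
    (forall j, 0 <= x j) ->
    (forall i, 1 <= rowdot A i x) ->
    let alpha := ln (Delta1 A) + ln (ln (Delta1 A)) + K1 in
    forall (i : 'I_m) (theta : R),
      0 < theta <= 1 ->
      1 / 2 <= \big[Rplus/0]_(j : 'I_n | Rleb theta (A i j)) (A i j * x j) ->
      1 / 2 <= \big[Rplus/0]_(j : 'I_n | Rleb (A i j) theta) (A i j * x j) ->
      Pr_row_lt1 A alpha x i <= C * theta / Delta1 A.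
Proof.
have e2 : 1 < exp 2 by have := exp_ineq1_le 2; lra.
exists (exp 2), 6, (exp 2); split; [exact: e2 | split; [lra | split; [exact: e2 |]]].
move=> m n A x hA hD hx hrow alpha i theta hth _ hS.
set D := Delta1 A in hD alpha *.
have D0 : 0 < D by lra.
set L := ln D in alpha *.
have L2 : 2 <= L by rewrite /L -(ln_exp 2); apply: ln_mono; lra.
set k := ln L in alpha *.
have k0 : 0 <= k by rewrite /k -ln_1; apply: ln_mono; lra.
have kL : k <= L - 1.
  have := exp_ineq1_le k; rewrite /k exp_ln; lra.
have ek : exp (- k) = / L by rewrite exp_Ropp /k exp_ln; lra.
have eL : exp (- L) = / D by rewrite exp_Ropp /L exp_ln.
have hL0 : 0 < L by lra.
set iL := / L in ek.
have LiL : L * iL = 1 by rewrite /iL; field; lra.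
have iL0 : 0 < iL by rewrite /iL; apply: Rinv_0_lt_compat.
have iL2 : iL <= 1 / 2 by nra.
have kiL : k * iL <= 1 by nra.
have hc : 0 <= 1 - iL by lra.
have ha : 0 <= alpha by rewrite /alpha; lra.
set u := / theta.
have htu : theta * u = 1 by rewrite /u; field; lra.
have hu0 : 0 < u by rewrite /u; apply: Rinv_0_lt_compat; lra.
have hu : 1 <= u by nra.
set t := k * u.
have ht : 0 <= t by rewrite /t; nra.
have hCh := chernoff m n A alpha x i t hx ha ht (fun j => proj1 (hA i j)).
have hLB := LB n (fun j => A i j) x theta k L (fun j => hA i j) hx hth k0 ek hc (hrow i) hS.
rewrite -/iL -/u in hLB.
have hsum : \big[Rplus/0]_j (alpha * x j * (1 - exp (- (t * A i j))))
   = alpha * \big[Rplus/0]_j (x j * (1 - exp (- (k * / theta * A i j)))).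
  rewrite big_distrr /=; apply: eq_bigr => j _; rewrite /t /u; ring.
rewrite hsum -/u in hCh.
set beta := alpha * (1 - iL) / 2.
have acE : alpha * (1 - iL) = L + k + 6 - 1 - k * iL - 6 * iL.
  rewrite /alpha -/L -/k; have : L * iL = 1 := LiL; nra.
have hgam : 1 <= beta - k by rewrite /beta; lra.
have hfin : k - 2 * beta <= 2 - L by rewrite /beta; lra.
have step1 : Pr_row_lt1 A alpha x i <= exp (t - beta * (1 + u)).
  apply: (Rle_trans _ _ _ hCh); apply: exp_mono.
  have : alpha * ((1 - iL) * (1 + u) / 2) <= alpha * \big[Rplus/0]_j (x j * (1 - exp (- (k * u * A i j)))).
    by apply: Rmult_le_compat_l.
  rewrite /beta /t; lra.
have step2 : u <= exp ((beta - k) * (u - 1)).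
  have := exp_ineq1_le ((beta - k) * (u - 1)); nra.
have step3 : exp (t - beta * (1 + u)) * u <= exp (2 - L).
  apply: (@Rle_trans _ (exp (t - beta * (1 + u)) * exp ((beta - k) * (u - 1)))).
    apply: Rmult_le_compat_l => //; left; exact: exp_pos.
  rewrite -exp_plus; apply: exp_mono; rewrite /t; nra.
have e2L : exp (2 - L) = exp 2 * / D by rewrite /Rminus exp_plus eL.
apply: (Rle_trans _ _ _ step1).
have P := exp_pos (t - beta * (1 + u)).
have -> : exp 2 * theta / D = exp (2 - L) * theta by rewrite e2L; field; lra.
have -> : exp (t - beta * (1 + u)) = exp (t - beta * (1 + u)) * u * theta by rewrite Rmult_assoc [u * _]Rmult_comm htu; ring.
apply: Rmult_le_compat_r; lra.
Qed.
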